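(* Assume (i) the Singer family hypothesis: for every prime $p$ there is a finite $S\subseteq\mathbb{Z}$ with $|S|=p+1$ that is Sidon modulo $p^2+p+1$; and (ii) the subpolynomial prime gap hypothesis: for every real $\delta>0$ there exists $x_0$ such that for every natural number $x\ge x_0$ there is a prime $p$ with $x-x^{\delta}<p\le x$. Then for every real $\varepsilon>0$ there exist $C\ge0$ and $N_0\in\mathbb{N}$ such that $h(N)\ge\sqrt{N}-C N^{\varepsilon}$ for all $N\ge N_0$.
   Context: A finite set $A\subseteq\mathbb{Z}$ is Sidon if $a+b=c+d$ with $a,b,c,d\in A$ implies $\{a,b\}=\{c,d\}$ as unordered pairs; for a positive integer $M$ it is Sidon modulo $M$ if $M\mid (a+b)-(c+d)$ with $a,b,c,d\in A$ implies $\{a,b\}=\{c,d\}$ as unordered pairs. For a natural number $N$, $h(N)=\max\{|A| : A\subseteq\{1,\dots,N\},\ A\text{ Sidon}\}$. *)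

(* Defs.v *)
From Stdlib Require Import Reals ZArith List Lia.
Open Scope R_scope.

(* Finite sets of integers are represented by duplicate-free lists. *)

Definition Sidon (A : list Z) : Prop :=
  forall a b c d, In a A -> In b A -> In c A -> In d A ->
    (a + b = c + d)%Z -> (a = c /\ b = d) \/ (a = d /\ b = c).

Definition SidonMod (M : Z) (A : list Z) : Prop :=
  forall a b c d, In a A -> In b A -> In c A -> In d A ->
    Z.divide M ((a + b) - (c + d))%Z -> (a = c /\ b = d) \/ (a = d /\ b = c).

Definition SidonIn (N k : nat) : Prop :=
  exists A : list Z, NoDup A /\ length A = k /\
    (forall a, In a A -> (1 <= a <= Z.of_nat N)%Z) /\ Sidon A.

Definition is_h (N k : nat) : Prop :=
  SidonIn N k /\ (forall k', SidonIn N k' -> (k' <= k)%nat).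

Definition prime_nat (p : nat) : Prop := Znumtheory.prime (Z.of_nat p).

Definition SingerHyp : Prop :=
  forall p : nat, prime_nat p ->
    exists S : list Z, NoDup S /\ length S = (p + 1)%nat /\
      SidonMod (Z.of_nat (p * p + p + 1)) S.

Definition PrimeGapHyp : Prop :=
  forall delta : R, delta > 0 -> exists x0 : R,
    forall x : nat, INR x >= x0 ->
      exists p : nat, prime_nat p /\
        INR x - Rpower (INR x) delta < INR p /\ (p <= x)%nat.

(* Main.v *)
Require Import Defs.
From Stdlib Require Import Reals ZArith List Lia Lra.
Open Scope R_scope.

Lemma construct (p N : nat) (S : list Z) :
  NoDup S -> length S = (p + 1)%nat ->
  SidonMod (Z.of_nat (p * p + p + 1)) S ->
  (p * p + p + 1 <= N)%nat -> SidonIn N (p + 1).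
Proof.
  intros HND HL HS HN.
  set (m := Z.of_nat (p * p + p + 1)) in *.
  assert (Hm : (0 < m)%Z) by (unfold m; lia).
  assert (HmN : (m <= Z.of_nat N)%Z) by (unfold m; lia).
  exists (map (fun s => (s mod m + 1)%Z) S).
  assert (key : forall a b c d, In a S -> In b S -> In c S -> In d S ->
     (a mod m + 1 + (b mod m + 1) = c mod m + 1 + (d mod m + 1))%Z ->
     (a = c /\ b = d) \/ (a = d /\ b = c)).
  { intros a b c d Ha Hb Hc Hd E. apply HS; auto.
    exists (a / m + b / m - c / m - d / m)%Z.
    pose proof (Z.div_mod a m ltac:(lia)).
    pose proof (Z.div_mod b m ltac:(lia)).
    pose proof (Z.div_mod c m ltac:(lia)).
    pose proof (Z.div_mod d m ltac:(lia)).
    nia. }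
  split; [|split; [|split]].
  - apply NoDup_map_NoDup_ForallPairs; auto.
    intros a c Ha Hc E.
    destruct (key a a c a Ha Ha Hc Ha) as [[? ?]|[? ?]]; auto; lia.
  - rewrite length_map; auto.
  - intros a Ha. apply in_map_iff in Ha as [s [<- _]].
    pose proof (Z.mod_pos_bound s m Hm). lia.
  - intros a b c d Ha Hb Hc Hd E.
    apply in_map_iff in Ha as [a' [<- Ha]].
    apply in_map_iff in Hb as [b' [<- Hb]].
    apply in_map_iff in Hc as [c' [<- Hc]].
    apply in_map_iff in Hd as [d' [<- Hd]].
    destruct (key a' b' c' d' Ha Hb Hc Hd E) as [[-> ->]|[-> ->]]; auto.
Qed.

Theorem mainTheorem14 :
  SingerHyp -> PrimeGapHyp ->
  forall eps : R, eps > 0 ->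
    exists (C : R) (N0 : nat), C >= 0 /\
      forall N k : nat, (N >= N0)%nat -> is_h N k ->
        INR k >= sqrt (INR N) - C * Rpower (INR N) eps.
Proof.
  intros HS HG eps Heps.
  destruct (HG eps Heps) as [x0 Hx0].
  set (M := (Z.to_nat (up x0) + 1)%nat).
  assert (HM : INR M >= x0).
  { unfold M. rewrite plus_INR, INR_IZR_INZ.
    destruct (archimed x0) as [H1 _].
    destruct (Z_le_gt_dec (up x0) 0).
    - replace (Z.to_nat (up x0)) with 0%nat by lia. simpl. 
      apply IZR_le in l. lra.
    - rewrite Z2Nat.id by lia. simpl. lra. }
  exists 2, ((M + 1) * (M + 1))%nat. split; [lra|].
  intros N k HN Hk.
  set (s := Nat.sqrt N).
  assert (Hs : (M + 1 <= s)%nat).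
  { rewrite <- (Nat.sqrt_square (M+1)). apply Nat.sqrt_le_mono. lia. }
  destruct (Nat.sqrt_spec N ltac:(lia)) as [Hs1 Hs2]. fold s in Hs1, Hs2.
  set (x := (s - 1)%nat).
  assert (Hxx : INR x >= x0).
  { assert (INR M <= INR x) by (apply le_INR; unfold x; lia). lra. }
  destruct (Hx0 x Hxx) as [p [Pp [Hlt Hle]]].
  destruct (HS p Pp) as [SS [HND [HL HSm]]].
  assert (Hpk : (p + 1 <= k)%nat).
  { apply (proj2 Hk). apply (construct p N SS); auto.
    unfold x in Hle. nia. }
  apply le_INR in Hpk. rewrite plus_INR in Hpk. simpl in Hpk.
  assert (HxR : INR x = INR s - 1).
  { unfold x. rewrite minus_INR by lia. simpl. lra. }
  assert (Hsq : sqrt (INR N) < INR s + 1).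
  { replace (INR s + 1) with (sqrt ((INR s + 1) * (INR s + 1))).
    - apply sqrt_lt_1_alt. split; [apply pos_INR|].
      replace (INR s + 1) with (INR (Datatypes.S s)) by (rewrite S_INR; lra).
      rewrite <- mult_INR. apply lt_INR. lia.
    - apply sqrt_square. pose proof (pos_INR s). lra. }
  assert (Hx1 : 1 <= INR x).
  { replace 1 with (INR 1) by reflexivity. apply le_INR. unfold x. lia. }
  assert (HxN : INR x <= INR N) by (apply le_INR; unfold x; nia).
  assert (P1 : Rpower (INR x) eps <= Rpower (INR N) eps).
  { apply Rle_Rpower_l; lra. }
  assert (P2 : 1 <= Rpower (INR N) eps).
  { rewrite <- (Rpower_O (INR N)) by lra. apply Rle_Rpower; lra. }
  lra.
Qed.
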